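(* Let $d\ge2$, $n\ge1$, let $H$ be a Hermitian operator on $(\mathbb{C}^d)^{\otimes n}$ and let $O$ be a linear operator with $\|O\|_2=1$. Then $|R_I(H,O)|\le4n\|H\|_\infty$.
   Context: Let $V=\mathbb{Z}_d\times\mathbb{Z}_d$; for $a=(s,t)\in V$, $P_a=X^sZ^t$ with $X|j\rangle=|j+1\bmod d\rangle$, $Z|j\rangle=e^{2\pi ij/d}|j\rangle$; $P_{\vec a}=\bigotimes_iP_{a_i}$, $|\vec a|=\#\{i:a_i\ne(0,0)\}$. $\|A\|_2=(d^{-n}\mathrm{Tr}(A^\dagger A))^{1/2}$. For $\|O\|_2=1$, $P_O[\vec a]=d^{-2n}|\mathrm{Tr}(OP_{\vec a})|^2$ and $I[O]=\sum_{\vec a}|\vec a|P_O[\vec a]$. The influence rate is $R_I(H,O)=\frac{d}{dt}I[U_tOU_t^\dagger]\big|_{t=0}$ with $U_t=e^{-itH}$; $\|\cdot\|_\infty$ is the operator norm. *)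

(* Defs.v *)
From HB Require Import structures.
From mathcomp Require Import all_boot all_order all_algebra.
From mathcomp Require Import all_classical all_reals all_analysis.
From mathcomp Require Import complex.

Set Implicit Arguments.
Unset Strict Implicit.
Unset Printing Implicit Defensive.

Import Order.TTheory GRing.Theory Num.Theory.
Import numFieldNormedType.Exports.
Local Open Scope ring_scope.
Local Open Scope classical_set_scope.

Section QuditDefs.
Variables (R : realType) (d n : nat).

Local Notation C := (R[i]).

Definition basis_label := {ffun 'I_n -> 'I_d}.
(* Hilbert space dimension d^n (= #|basis_label|) *)
Definition dimH : nat := #|{: basis_label}|.
Definition op := 'M[C]_dimH.
Definition digits (k : 'I_dimH) : basis_label := enum_val k.

Definition cabs2 (z : C) : R := (complex.Re z) ^+ 2 + (complex.Im z) ^+ 2.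
Definition adj (A : op) : op := (map_mx (@conjc R) A)^T.
Definition is_hermitian (A : op) : Prop := adj A = A.

Definition omega : C := Complex (cos (2 * pi / d%:R)) (sin (2 * pi / d%:R)).

(* Pauli labels a = (s,t) in Z_d x Z_d, and strings of them *)
Definition pauli_string := {ffun 'I_n -> 'I_d * 'I_d}.

(* P_{vec a} = tensor_i X^{s_i} Z^{t_i}; matrix entry
   <k| P |j> = prod_i [k_i = j_i + s_i mod d] omega^(t_i j_i) *)
Definition pauli (a : pauli_string) : op :=
  \matrix_(k, j) \prod_(i < n)
     ((((digits k i : nat) == ((digits j i + (a i).1) %% d)%N))%:R
       * omega ^+ ((a i).2 * digits j i)%N).

Definition nontrivial_site (p : 'I_d * 'I_d) : bool :=
  (nat_of_ord p.1 != 0)%N || (nat_of_ord p.2 != 0)%N.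

Definition weight (a : pauli_string) : nat :=
  #|[set i : 'I_n | nontrivial_site (a i)]|.

Definition hs_norm (A : op) : R :=
  Num.sqrt (complex.Re (\tr (adj A *m A)) / (d ^ n)%:R).

Definition pauli_weight (O : op) (a : pauli_string) : R :=
  cabs2 (\tr (O *m pauli a)) / ((d ^ n)%:R ^+ 2).

Definition influence (O : op) : R :=
  \sum_(a : pauli_string) (weight a)%:R * pauli_weight O a.

Definition mxpow (A : op) (m : nat) : op := iter m (fun B => A *m B) 1%:M.
Definition expm_partial (A : op) (N : nat) : op :=
  \sum_(m < N) ((m`!)%:R^-1 *: mxpow A m).
Definition expm (A : op) : op :=
  \matrix_(k, j) Complex (limn (fun N : nat => complex.Re (expm_partial A N k j)))
                         (limn (fun N : nat => complex.Im (expm_partial A N k j))).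

Definition evol (H : op) (t : R) : op := expm ((Complex 0 (- t)) *: H).

Definition influence_rate (H O : op) : R :=
  derive1 (fun t : R => influence (evol H t *m O *m adj (evol H t))) 0.

Definition vnorm (v : 'cV[C]_dimH) : R := Num.sqrt (\sum_k cabs2 (v k 0)).
Definition opnorm (A : op) : R :=
  sup [set x : R | exists v : 'cV[C]_dimH, vnorm v = 1 /\ x = vnorm (A *m v)].

End QuditDefs.

(* Main.v *)
Require Import Defs.
From HB Require Import structures.
From mathcomp Require Import all_boot all_order all_algebra.
From mathcomp Require Import all_classical all_reals all_analysis complex.
From mathcomp Require Import ring lra.
Import Order.TTheory GRing.Theory Num.Theory numFieldNormedType.Exports.
Set Implicit Arguments.
Unset Strict Implicit.
Unset Printing Implicit Defensive.
Local Open Scope ring_scope.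

Module Part1.
Section L2.
Variable R : rcfType.
Variable I : finType.
Definition l2 (f : I -> R) : R := Num.sqrt (\sum_i f i ^+ 2).

Lemma sumsq_ge0 (f : I -> R) : 0 <= \sum_i f i ^+ 2.
Proof. by apply: sumr_ge0 => i _; rewrite sqr_ge0. Qed.

Lemma l2_ge0 f : 0 <= l2 f.
Proof. exact: sqrtr_ge0. Qed.

Lemma l2_sqr f : l2 f ^+ 2 = \sum_i f i ^+ 2.
Proof. by rewrite sqr_sqrtr // sumsq_ge0. Qed.

Lemma sqr_le (a b : R) : 0 <= b -> a ^+ 2 <= b ^+ 2 -> a <= b.
Proof.
move=> hb h; have [ha|ha] := lerP 0 a.
  by rewrite -(ler_pXn2r (_ : 0 < 2)%N) ?nnegrE.
by apply: le_trans hb; apply: ltW.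
Qed.

Lemma sum_prod (a b : I -> R) : \sum_i \sum_j a i * b j = (\sum_i a i) * (\sum_j b j).
Proof. by rewrite mulr_suml; apply: eq_bigr => i _; rewrite mulr_sumr. Qed.

Lemma CS2 (f g : I -> R) :
  (\sum_i f i * g i) ^+ 2 <= (\sum_i f i ^+ 2) * (\sum_i g i ^+ 2).
Proof.
have H0 : 0 <= \sum_i \sum_j (f i * g j - f j * g i) ^+ 2.
  by apply: sumr_ge0 => i _; apply: sumr_ge0 => j _; rewrite sqr_ge0.
have E1 : forall i j, (f i * g j - f j * g i) ^+ 2 =
      f i ^+ 2 * g j ^+ 2 + g i ^+ 2 * f j ^+ 2 - (2 * (f i * g i)) * (f j * g j).
  by move=> i j; ring.
have E : \sum_i \sum_j (f i * g j - f j * g i) ^+ 2 =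
   (\sum_i f i ^+ 2) * (\sum_i g i ^+ 2) + (\sum_i g i ^+ 2) * (\sum_i f i ^+ 2)
   - 2 * (\sum_i f i * g i) ^+ 2.
  under eq_bigr do under eq_bigr do rewrite E1.
  under eq_bigr do rewrite sumrB big_split /=.
  rewrite sumrB big_split /= !sum_prod -mulr_sumr; ring.
rewrite E in H0; move: H0; rewrite [X in _ + X - _]mulrC; lra.
Qed.

Lemma CS (f g : I -> R) : \sum_i f i * g i <= l2 f * l2 g.
Proof.
apply: sqr_le; first by rewrite mulr_ge0 ?l2_ge0.
by rewrite exprMn !l2_sqr CS2.
Qed.

Lemma l2_add (f g : I -> R) : l2 (fun i => f i + g i) <= l2 f + l2 g.
Proof.
apply: sqr_le; first by rewrite addr_ge0 ?l2_ge0.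
have E : forall i, (f i + g i) ^+ 2 = f i ^+ 2 + g i ^+ 2 + 2 * (f i * g i).
  by move=> i; ring.
rewrite l2_sqr; under eq_bigr do rewrite E.
rewrite !big_split /= -mulr_sumr sqrrD !l2_sqr.
have := CS f g; lra.
Qed.

Lemma l2_le (f g : I -> R) : (forall i, `|f i| <= g i) -> l2 f <= l2 g.
Proof.
move=> h; rewrite /l2 ler_sqrt ?sumsq_ge0 //; apply: ler_sum => i _.
rewrite -real_normK ?num_real //; rewrite ler_pXn2r ?nnegrE //.
by apply: le_trans (h i).
Qed.

Lemma l2_scale (c : R) (f : I -> R) : l2 (fun i => c * f i) = `|c| * l2 f.
Proof.
rewrite /l2; under eq_bigr do rewrite exprMn.
by rewrite -mulr_sumr sqrtrM ?sqr_ge0 // sqrtr_sqr.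
Qed.
Lemma l2_le_sum (f : I -> R) : l2 f <= \sum_i `|f i|.
Proof.
apply: sqr_le; first by apply: sumr_ge0 => i _.
rewrite l2_sqr expr2 -sum_prod; apply: ler_sum => i _.
rewrite (bigD1 i) //= -normrM -real_normK ?num_real // expr2 normrM.
by rewrite lerDl; apply: sumr_ge0 => j _; rewrite mulr_ge0.
Qed.
End L2.
Lemma sum_prod2 (R : rcfType) (I J : finType) (a : I -> R) (b : J -> R) :
  \sum_i \sum_j a i * b j = (\sum_i a i) * (\sum_j b j).
Proof. by rewrite mulr_suml; apply: eq_bigr => i _; rewrite mulr_sumr. Qed.

End Part1.
Import Part1.

Module Part2.
Local Open Scope complex_scope.
Section Cx.
Variable R : realType.
Local Notation C := (R[i]).

Definition nc (z : C) : R := Num.sqrt (cabs2 z).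

Lemma cabs2_ge0 (z : C) : 0 <= cabs2 z.
Proof. by rewrite /cabs2 addr_ge0 ?sqr_ge0. Qed.

Lemma nc_ge0 (z : C) : 0 <= nc z.
Proof. exact: sqrtr_ge0. Qed.

Lemma nc_sqr (z : C) : nc z ^+ 2 = cabs2 z.
Proof. by rewrite sqr_sqrtr // cabs2_ge0. Qed.

Lemma nc_normc (z : C) : nc z = Normc.normc z.
Proof. by case: z. Qed.

Lemma ncM (z w : C) : nc (z * w) = nc z * nc w.
Proof. by rewrite !nc_normc Normc.normcM. Qed.

Lemma ncD (z w : C) : nc (z + w) <= nc z + nc w.
Proof. by rewrite !nc_normc le_normcD. Qed.

Lemma ncN (z : C) : nc (- z) = nc z.
Proof. by rewrite !nc_normc normcN. Qed.

Lemma ncB (z w : C) : nc (z - w) <= nc z + nc w.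
Proof. by rewrite -(ncN w) ncD. Qed.

Lemma ncBC (z w : C) : nc (z - w) = nc (w - z).
Proof. by rewrite -ncN opprB. Qed.

Lemma ncJ (z : C) : nc (conjc z) = nc z.
Proof. by case: z => a b; rewrite /nc /cabs2 /= sqrrN. Qed.

Lemma nc_real (x : R) : nc (x%:C) = `|x|.
Proof. by rewrite /nc /cabs2 /= expr0n /= addr0 sqrtr_sqr. Qed.

Lemma nc0 : nc 0 = 0.
Proof. by rewrite /nc /cabs2 /= expr0n /= addr0 sqrtr0. Qed.

Lemma nc_eq0 (z : C) : nc z = 0 -> z = 0.
Proof. by rewrite nc_normc => /Normc.eq0_normc. Qed.

Lemma Re_le (z : C) : `|complex.Re z| <= nc z.
Proof.
rewrite /nc /cabs2 -sqrtr_sqr ler_sqrt ?addr_ge0 ?sqr_ge0 //.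
by rewrite lerDl sqr_ge0.
Qed.

Lemma Im_le (z : C) : `|complex.Im z| <= nc z.
Proof.
rewrite /nc /cabs2 -sqrtr_sqr ler_sqrt ?addr_ge0 ?sqr_ge0 //.
by rewrite lerDr sqr_ge0.
Qed.
Lemma nc_le_ReIm (z : C) : nc z <= `|complex.Re z| + `|complex.Im z|.
Proof.
case: z => a b; rewrite /nc /cabs2 /=.
apply: sqr_le; first by rewrite addr_ge0.
rewrite sqr_sqrtr ?addr_ge0 ?sqr_ge0 // sqrrD !real_normK ?num_real //.
have := mulr_ge0 (normr_ge0 a) (normr_ge0 b); lra.
Qed.
Lemma cabs2_conj (z : C) : (cabs2 z)%:C = z * conjc z.
Proof.
case: z => a b; rewrite /cabs2 /=; apply/eqP; rewrite eq_complex /=; apply/andP; split; apply/eqP; ring.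
Qed.

Lemma ReD (z w : C) : complex.Re (z + w) = complex.Re z + complex.Re w.
Proof. by case: z; case: w. Qed.
Lemma ImD (z w : C) : complex.Im (z + w) = complex.Im z + complex.Im w.
Proof. by case: z; case: w. Qed.

Lemma Re_sum (I : finType) (F : I -> C) : complex.Re (\sum_i F i) = \sum_i complex.Re (F i).
Proof. exact: (big_morph _ ReD (erefl _)). Qed.
Lemma Im_sum (I : finType) (F : I -> C) : complex.Im (\sum_i F i) = \sum_i complex.Im (F i).
Proof. exact: (big_morph _ ImD (erefl _)). Qed.

Lemma nc_sum (I : finType) (F : I -> C) : nc (\sum_i F i) <= \sum_i nc (F i).
Proof.
elim/big_ind2: _ => //; first by rewrite nc0.
by move=> x1 x2 y1 y2 h1 h2; apply: le_trans (ncD _ _) _; apply: lerD.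
Qed.
Lemma cabs2_diff (x o : C) : `|cabs2 x - cabs2 o| <= nc (x - o) * (nc x + nc o).
Proof.
rewrite -!nc_sqr subr_sqr normrM (ger0_norm (addr_ge0 (nc_ge0 x) (nc_ge0 o))).
apply: ler_pM => //; [exact: addr_ge0 (nc_ge0 _) (nc_ge0 _)|].
have h1 := ncD (x - o) o; have h2 := ncD (o - x) x.
rewrite subrK in h1; rewrite subrK -ncBC in h2.
rewrite ler_norml; apply/andP; split; lra.
Qed.

Definition fn p q (A : 'M[C]_(p, q)) : R := l2 (fun ij : 'I_p * 'I_q => nc (A ij.1 ij.2)).

Lemma fn_ge0 p q (A : 'M[C]_(p, q)) : 0 <= fn A.
Proof. exact: l2_ge0. Qed.

Lemma fn_sqr p q (A : 'M[C]_(p, q)) : fn A ^+ 2 = \sum_i \sum_j cabs2 (A i j).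
Proof.
rewrite /fn l2_sqr pair_bigA /=; apply: eq_bigr => ij _; by rewrite nc_sqr.
Qed.

Lemma fn_add p q (A B : 'M[C]_(p, q)) : fn (A + B) <= fn A + fn B.
Proof.
apply: le_trans (l2_add _ _); apply: l2_le => ij; rewrite mxE ger0_norm ?nc_ge0 //.
exact: ncD.
Qed.

Lemma fn_opp p q (A : 'M[C]_(p, q)) : fn (- A) = fn A.
Proof. by rewrite /fn; congr l2; apply/funext => ij; rewrite mxE ncN. Qed.

Lemma fn_sub p q (A B : 'M[C]_(p, q)) : fn (A - B) <= fn A + fn B.
Proof. by apply: le_trans (fn_add _ _) _; rewrite fn_opp. Qed.

Lemma fn_scale p q c (A : 'M[C]_(p, q)) : fn (c *: A) = nc c * fn A.
Proof.
rewrite /fn -[nc c]ger0_norm ?nc_ge0 // -l2_scale; congr l2; apply/funext => ij.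
by rewrite mxE ncM.
Qed.

Lemma fn_entry p q (A : 'M[C]_(p, q)) i j : nc (A i j) <= fn A.
Proof.
apply: sqr_le; first exact: fn_ge0.
rewrite /fn l2_sqr (bigD1 (i, j)) //= lerDl.
by apply: sumr_ge0 => ? _; rewrite sqr_ge0.
Qed.

Lemma fn_bound p q (A : 'M[C]_(p, q)) M :
  (forall i j, nc (A i j) <= M) -> fn A <= (p * q)%:R * M.
Proof.
move=> h; apply: le_trans (l2_le_sum _) _.
have -> : (p * q)%:R * M = \sum_(ij : 'I_p * 'I_q) M.
  by rewrite sumr_const card_prod !card_ord mulr_natl.
by apply: ler_sum => ij _; rewrite ger0_norm ?nc_ge0 ?h.
Qed.
Lemma fn_mul p q r (A : 'M[C]_(p, q)) (B : 'M[C]_(q, r)) : fn (A *m B) <= fn A * fn B.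
Proof.
apply: sqr_le; first by rewrite mulr_ge0 ?fn_ge0.
rewrite exprMn !fn_sqr [X in _ * X]exchange_big /=.
rewrite -(sum_prod2 (fun i : 'I_p => \sum_j cabs2 (A i j)) (fun k : 'I_r => \sum_j cabs2 (B j k))); apply: ler_sum => i _.
apply: ler_sum => k _; rewrite mxE.
have e1 : \sum_j cabs2 (A i j) = \sum_j nc (A i j) ^+ 2.
  by apply: eq_bigr => j _; rewrite nc_sqr.
have e2 : \sum_j cabs2 (B j k) = \sum_j nc (B j k) ^+ 2.
  by apply: eq_bigr => j _; rewrite nc_sqr.
rewrite e1 e2; apply: le_trans (CS2 (fun j => nc (A i j)) (fun j => nc (B j k))).
rewrite -nc_sqr ler_pXn2r ?nnegrE ?nc_ge0 //; last by apply: sumr_ge0 => j _; rewrite mulr_ge0 ?nc_ge0.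
apply: le_trans (nc_sum _) _; apply: ler_sum => j _; by rewrite ncM.
Qed.

Lemma fn_adj d n (A : op R d n) : fn (adj A) = fn A.
Proof.
rewrite -[LHS]ger0_norm ?fn_ge0 // -[RHS]ger0_norm ?fn_ge0 // -!sqrtr_sqr !fn_sqr.
rewrite exchange_big /=; congr Num.sqrt.
apply: eq_bigr => i _; apply: eq_bigr => j _; by rewrite /adj !mxE -!nc_sqr ncJ.
Qed.

Lemma adj_mul d n (A B : op R d n) : adj (A *m B) = adj B *m adj A.
Proof. by rewrite /adj map_mxM trmx_mul. Qed.

Lemma adjD d n (A B : op R d n) : adj (A + B) = adj A + adj B.
Proof. by apply/matrixP => i j; rewrite /adj !mxE rmorphD. Qed.

Lemma adjZ d n c (A : op R d n) : adj (c *: A) = conjc c *: adj A.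
Proof. by apply/matrixP => i j; rewrite /adj !mxE rmorphM. Qed.

Lemma adj1 d n : adj (1%:M : op R d n) = 1%:M.
Proof. by apply/matrixP => i j; rewrite /adj !mxE conjc_nat eq_sym. Qed.

Lemma adjK d n (A : op R d n) : adj (adj A) = A.
Proof. by apply/matrixP => i j; rewrite /adj !mxE conjcK. Qed.

Lemma vnorm_fn d n (v : 'cV[C]_(dimH d n)) : vnorm v = fn v.
Proof.
rewrite /vnorm -[RHS]ger0_norm ?fn_ge0 // -sqrtr_sqr fn_sqr; congr Num.sqrt.
by apply: eq_bigr => k _; rewrite big_ord1.
Qed.

Lemma tr_fn d n (A : op R d n) : complex.Re (\tr (adj A *m A)) = fn A ^+ 2.
Proof.
rewrite fn_sqr /mxtrace Re_sum exchange_big /=; apply: eq_bigr => j _.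
rewrite mxE Re_sum; apply: eq_bigr => i _.
rewrite /adj !mxE mulrC -cabs2_conj //.
Qed.
End Cx.

End Part2.
Import Part2.

Module Part3.
Local Open Scope complex_scope.
Local Open Scope classical_set_scope.
Section Op.
Variables (R : realType) (d n : nat).
Local Notation C := (R[i]).
Local Notation op := (op R d n).
Local Notation D := (dimH d n).

Lemma fn_eq0 p q (A : 'M[C]_(p, q)) : fn A = 0 -> A = 0.
Proof.
move=> h; apply/matrixP => i j; rewrite mxE; apply: nc_eq0.
by apply: le_anti; rewrite nc_ge0 andbT -h fn_entry.
Qed.

Lemma opnorm_ub (A : op) : has_ubound [set x : R | exists v : 'cV[C]_D, vnorm v = 1 /\ x = vnorm (A *m v)].
Proof.
exists (fn A) => x [v [h1 ->]]; rewrite vnorm_fn.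
by apply: le_trans (fn_mul _ _) _; rewrite -vnorm_fn h1 mulr1.
Qed.

Lemma normalize (v : 'cV[C]_D) : vnorm v != 0 ->
  vnorm (((vnorm v)^-1)%:C *: v) = 1.
Proof.
move=> h; rewrite !vnorm_fn fn_scale nc_real ger0_norm ?invr_ge0 ?fn_ge0 //.
by rewrite mulVf // -vnorm_fn.
Qed.

Lemma opnorm_vec (A : op) (v : 'cV[C]_D) : vnorm (A *m v) <= opnorm A * vnorm v.
Proof.
have [h0|h0] := eqVneq (vnorm v) 0.
  have fn0 : fn (0 : 'cV[C]_D) = 0.
    by rewrite -(scale0r (0 : 'cV[C]_D)) fn_scale nc0 mul0r.
  move: (h0); rewrite vnorm_fn => /fn_eq0 ->; rewrite mulmx0 !vnorm_fn fn0 mulr0.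
  by [].
have hw := normalize h0.
have hs : [set x : R | exists v : 'cV[C]_D, vnorm v = 1 /\ x = vnorm (A *m v)]
   (vnorm (A *m (((vnorm v)^-1)%:C *: v))) by exists (((vnorm v)^-1)%:C *: v).
have := ub_le_sup (opnorm_ub A) hs.
rewrite -scalemxAr !vnorm_fn fn_scale nc_real ger0_norm ?invr_ge0 ?fn_ge0 // -!vnorm_fn.
have vp : 0 < vnorm v by rewrite lt0r h0 vnorm_fn fn_ge0.
by rewrite ler_pdivrMl // mulrC.
Qed.

Lemma opnorm_ge0 (A : op) (i0 : 'I_D) : 0 <= opnorm A.
Proof.
pose v : 'cV[C]_D := const_mx 1.
have h0 : vnorm v != 0.
  rewrite vnorm_fn; apply/eqP => h; have := fn_entry v i0 0.
  by rewrite h mxE /nc /cabs2 /= expr0n /= addr0 expr1n sqrtr1 ler10.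
have hs : [set x : R | exists v : 'cV[C]_D, vnorm v = 1 /\ x = vnorm (A *m v)]
   (vnorm (A *m (((vnorm v)^-1)%:C *: v))) by exists (((vnorm v)^-1)%:C *: v); rewrite normalize.
apply: le_trans (ub_le_sup (opnorm_ub A) hs).
by rewrite vnorm_fn fn_ge0.
Qed.

Lemma fn_mul_op (A B : op) (i0 : 'I_D) : fn (A *m B) <= opnorm A * fn B.
Proof.
apply: sqr_le; first by rewrite mulr_ge0 ?fn_ge0 ?(opnorm_ge0 _ i0).
rewrite exprMn !fn_sqr exchange_big /= [X in _ <= _ * X]exchange_big /= mulr_sumr.
apply: ler_sum => j _.
have := opnorm_vec A (col j B).
have e1 : vnorm (A *m col j B) ^+ 2 = \sum_i cabs2 ((A *m B) i j).
  rewrite /vnorm sqr_sqrtr; last by apply: sumr_ge0 => i _; apply: cabs2_ge0.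
  apply: eq_bigr => i _; rewrite !mxE; congr cabs2; apply: eq_bigr => k _; by rewrite mxE.
have e2 : vnorm (col j B) ^+ 2 = \sum_i cabs2 (B i j).
  rewrite /vnorm sqr_sqrtr; last by apply: sumr_ge0 => i _; apply: cabs2_ge0.
  by apply: eq_bigr => i _; rewrite mxE.
rewrite -e1 -e2 -exprMn => h.
rewrite ler_pXn2r ?nnegrE ?mulr_ge0 ?(opnorm_ge0 _ i0) //; rewrite vnorm_fn fn_ge0 //.
Qed.

Lemma fn_mul_op_r (B H : op) (i0 : 'I_D) : adj H = H -> fn (B *m H) <= opnorm H * fn B.
Proof.
move=> hH; rewrite -fn_adj adj_mul hH -(fn_adj B).
exact: fn_mul_op.
Qed.
End Op.

End Part3.
Import Part3.

Module Part4.
Local Open Scope complex_scope.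
Section Pauli.
Variables (R : realType) (d : nat).
Hypothesis hd : (0 < d)%N.
Local Notation C := (R[i]).
Local Notation w := (omega R d).
Local Notation th := (2 * pi / d%:R : R).

Lemma omegaX m : w ^+ m = Complex (cos (m%:R * th)) (sin (m%:R * th)).
Proof.
elim: m => [|m IH]; first by rewrite expr0 mul0r cos0 sin0.
rewrite exprS IH /omega; set t := (_ / d%:R).
rewrite -[m.+1]addn1 natrD mulrDl mul1r cosD sinD.
apply/eqP; rewrite eq_complex /=; apply/andP; split; apply/eqP; ring.
Qed.

Lemma omega_d : w ^+ d = 1.
Proof.
rewrite omegaX mulrCA divff ?pnatr_eq0 -?lt0n // mulr1.
have c2 : cos (2 * pi) = 1 :> R.
  by rewrite mulr_natl cos_mulr2n cospi expr2 mulrNN mulr1 mulr2n addrK.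
have s2 : sin (2 * pi) = 0 :> R.
  by rewrite mulr_natl mulr2n sinD sinpi !mul0r mulr0 addr0.
by rewrite c2 s2.
Qed.

Lemma omega_conj : w * conjc w = 1.
Proof.
move: (cos2Dsin2 (2 * pi / d%:R : R)); rewrite /omega.
set c := cos _; set s := sin _ => h.
apply/eqP; rewrite eq_complex /=; apply/andP; split; apply/eqP.
  by rewrite -h; ring.
ring.
Qed.

Lemma omega_neq1 m : (0 < m < d)%N -> w ^+ m != 1.
Proof.
move=> /andP [m0 md]; rewrite omegaX; apply/negP => /eqP [hc _].
set x := m%:R * th in hc.
have dp : (0 : R) < d%:R by rewrite ltr0n.
have x0 : 0 < x / 2.
  by rewrite /x divr_gt0 // mulr_gt0 ?ltr0n // divr_gt0 // mulr_gt0 ?pi_gt0.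
have dn0 : (d%:R : R) != 0 by rewrite pnatr_eq0 -lt0n.
have ex : x / 2 = pi * (m%:R / d%:R) by rewrite /x; field.
have xpi : x / 2 < pi.
  rewrite ex -[X in _ < X]mulr1 ltr_pM2l ?pi_gt0 // ltr_pdivrMr // mul1r ltr_nat //.
have sp : 0 < sin (x / 2) by apply: sin_gt0_pi; rewrite x0 xpi.
have : cos x = 1 - 2 * sin (x / 2) ^+ 2.
  have e2 : (x / 2) *+ 2 = x by rewrite mulr2n; lra.
  have := cos_mulr2n (x / 2); rewrite e2 cos2sin2 => ->; rewrite mulr2n; lra.
rewrite hc => h.
have : 0 < sin (x / 2) ^+ 2 by rewrite exprn_gt0.
lra.
Qed.

Lemma geom0 (z : C) : z ^+ d = 1 -> z != 1 -> \sum_(t < d) z ^+ t = 0.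
Proof.
move=> zd z1; have := subrX1 z d; rewrite zd subrr => /esym /eqP.
by rewrite mulf_eq0 subr_eq0 (negbTE z1) /= => /eqP.
Qed.

Lemma conjM (a b : C) : conjc (a * b) = conjc a * conjc b.
Proof. exact: rmorphM. Qed.
Lemma conjn k : conjc (k%:R : C) = k%:R.
Proof. exact: rmorph_nat. Qed.

Lemma conjX (z : C) k : conjc (z ^+ k) = (conjc z) ^+ k.
Proof. exact: rmorphXn. Qed.

Lemma gsum (y y' : 'I_d) :
  \sum_(t < d) (w ^+ y * conjc (w ^+ y')) ^+ t = (d * (y == y'))%:R.
Proof.
case: (eqVneq y y') => [<-|ne].
  rewrite conjX -exprMn omega_conj expr1n.
  under eq_bigr do rewrite expr1n.
  by rewrite sumr_const card_ord muln1.
rewrite muln0; apply: geom0.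
  by rewrite exprMn -conjX -!exprM !(mulnC _ d) !exprM omega_d !expr1n conjc1 mulr1.
have [lt|lt] := ltnP y' y.
  have -> : w ^+ y * conjc (w ^+ y')= w ^+ (y - y').
    by rewrite -{1}(subnK (ltnW lt)) exprD -mulrA conjX -exprMn omega_conj expr1n mulr1.
  by apply: omega_neq1; rewrite subn_gt0 lt /= (leq_ltn_trans (leq_subr _ _)).
have lt' : (y < y')%N by rewrite ltn_neqAle lt andbT; apply/eqP => /val_inj; apply/eqP.
have -> : w ^+ y * conjc (w ^+ y')= conjc (w ^+ (y' - y)).
  by rewrite -{1}(subnK (ltnW lt')) !conjX exprD mulrCA -exprMn omega_conj expr1n mulr1.
apply/negP => /eqP h; have : (w ^+ (y' - y)) = 1 by rewrite -[LHS]conjcK h conjc1.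
apply/eqP; apply: omega_neq1; rewrite subn_gt0 lt' /= (leq_ltn_trans (leq_subr _ _)) //.
Qed.

Lemma uniq1 (x y : 'I_d) : \sum_(s < d) ((x : nat) == ((y + s) %% d)%N)%:R = 1 :> C.
Proof.
pose s0 := Ordinal (ltn_pmod (x + (d - y)) hd).
rewrite (bigD1 s0) //= big1 ?addr0.
  have -> : ((y + s0) %% d = x)%N.
    rewrite /= modnDmr addnCA subnKC ?(ltnW (ltn_ord y)) // modnDr modn_small //.
  by rewrite eqxx.
move=> s ns; case: eqP => // h.
exfalso; move/negP: ns; apply; apply/eqP/val_inj => /=.
have : ((y + s) %% d = (y + s0) %% d)%N.
  rewrite -h /= modnDmr addnCA subnKC ?(ltnW (ltn_ord y)) // modnDr modn_small //.
by move/eqP; rewrite eqn_modDl (modn_small (ltn_ord s)) (modn_small (ltn_ord s0)) => /eqP.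
Qed.

Lemma count2 (x x' y : 'I_d) :
  \sum_(s < d) ((((x : nat) == ((y + s) %% d)%N) && ((x' : nat) == ((y + s) %% d)%N)))%:R
  = (x == x')%:R :> C.
Proof.
case: (eqVneq x x') => [<-|ne].
  by under eq_bigr do rewrite andbb; rewrite uniq1.
rewrite big1 // => s _; case: eqP => //= h1; case: eqP => //= h2.
by move: ne; rewrite -val_eqE /= h1 h2 eqxx.
Qed.

Definition fsite (x y : 'I_d) (p : 'I_d * 'I_d) : C :=
  (((x : nat) == ((y + p.1) %% d)%N))%:R * w ^+ (p.2 * y)%N.

Lemma site_sum (x y x' y' : 'I_d) :
  \sum_p fsite x y p * conjc (fsite x' y' p) = (d * ((x == x') && (y == y')))%:R.
Proof.
rewrite -(pair_bigA _ (fun s t => fsite x y (s, t) * conjc (fsite x' y' (s, t)))) /=.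
have E : forall (s t : 'I_d), fsite x y (s, t) * conjc (fsite x' y' (s, t)) =
   ((((x : nat) == ((y + s) %% d)%N) && ((x' : nat) == ((y' + s) %% d)%N)))%:R
   * (w ^+ y * conjc (w ^+ y')) ^+ t.
  move=> s t; rewrite /fsite conjM conjn /= -mulnb natrM mulrACA.
  by rewrite exprMn !conjX -!exprM !(mulnC t).
under eq_bigr do under eq_bigr do rewrite E.
under eq_bigr do rewrite -mulr_sumr gsum.
rewrite -mulr_suml.
case: (eqVneq y y') => [<-|ne]; last by rewrite !andbF muln0 mulr0.
by rewrite count2 andbT muln1 natrM mulrC.
Qed.
End Pauli.

End Part4.
Import Part4.

Module Part5.
Section Pars.
Variables (R : realType) (d n : nat).
Hypothesis hd : (0 < d)%N.
Local Notation C := (R[i]).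
Local Notation D := (dimH d n).

Lemma pauli_entry (a : pauli_string d n) k j :
  pauli R a k j = \prod_i fsite R (digits k i) (digits j i) (a i).
Proof. by rewrite mxE. Qed.

Lemma conjP (I : finType) (F : I -> C) : conjc (\prod_i F i) = \prod_i conjc (F i).
Proof. exact: rmorph_prod. Qed.
Lemma conjS (I : finType) (F : I -> C) : conjc (\sum_i F i) = \sum_i conjc (F i).
Proof. exact: rmorph_sum. Qed.

Lemma Gsum (k j k' j' : 'I_D) :
  \sum_(a : pauli_string d n) pauli R a k j * conjc (pauli R a k' j')
  = ((d ^ n) * ((k == k') && (j == j')))%:R.
Proof.
under eq_bigr do rewrite !pauli_entry conjP -big_split /=.
rewrite -(bigA_distr_bigA (fun i p => fsite R (digits k i) (digits j i) p *
             conjc (fsite R (digits k' i) (digits j' i) p))) /=.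
under eq_bigr do rewrite site_sum //.
case E: [forall i, (digits k i == digits k' i) && (digits j i == digits j' i)].
  have hk : k = k'.
    apply: enum_val_inj; apply/ffunP => i; have := forallP E i; by case/andP => /eqP.
  have hj : j = j'.
    apply: enum_val_inj; apply/ffunP => i; have := forallP E i; by case/andP => _ /eqP.
  rewrite hk hj !eqxx muln1.
  under eq_bigr => i _ do rewrite !eqxx muln1.
  by rewrite prodr_const card_ord natrX.
move/negbT: E; rewrite negb_forall => /existsP [i hi].
rewrite (bigD1 i) //= (negbTE hi) muln0 mul0r.
case: (eqVneq k k') => [hk|_] /=; last by rewrite muln0.
case: (eqVneq j j') => [hj|_] /=; last by rewrite muln0.
by move: hi; rewrite hk hj !eqxx.
Qed.

Lemma tr_pair (Y : op R d n) a :
  \tr (Y *m pauli R a) = \sum_(u : 'I_D * 'I_D) Y u.1 u.2 * pauli R a u.2 u.1.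
Proof.
rewrite /mxtrace -(pair_bigA _ (fun k j => Y k j * pauli R a j k)) /=.
by apply: eq_bigr => k _; rewrite mxE.
Qed.

Lemma parsevalC (Y : op R d n) :
  \sum_(a : pauli_string d n) \tr (Y *m pauli R a) * conjc (\tr (Y *m pauli R a))
  = (\sum_(u : 'I_D * 'I_D) Y u.1 u.2 * conjc (Y u.1 u.2)) *+ (d ^ n).
Proof.
under eq_bigr do rewrite tr_pair conjS mulr_suml.
under eq_bigr do under eq_bigr do rewrite mulr_sumr.
rewrite exchange_big /=; under eq_bigr do rewrite exchange_big /=.
rewrite -sumrMnl; apply: eq_bigr => u _.
under eq_bigr do (under eq_bigr do rewrite conjM mulrACA; rewrite -mulr_sumr Gsum).
rewrite (bigD1 u) //= big1 ?addr0.
  by rewrite !eqxx muln1 mulr_natr.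
move=> v nv; suff -> : ((u.2 == v.2) && (u.1 == v.1)) = false by rewrite muln0 mulr0.
by apply/negbTE; apply: contra nv => /andP [/eqP h2 /eqP h1]; apply/eqP; rewrite [v]surjective_pairing -h1 -h2 -surjective_pairing.
Qed.

Lemma ReMn (z : C) m : complex.Re (z *+ m) = complex.Re z *+ m.
Proof. by elim: m => // m IH; rewrite !mulrS ReD IH. Qed.

Lemma parseval (Y : op R d n) :
  \sum_(a : pauli_string d n) cabs2 (\tr (Y *m pauli R a)) = (d ^ n)%:R * fn Y ^+ 2.
Proof.
have := congr1 (@complex.Re R) (parsevalC Y); rewrite Re_sum ReMn Re_sum.
under eq_bigr do rewrite -cabs2_conj /=.
under [X in _ = X *+ _ -> _]eq_bigr do rewrite -cabs2_conj /=.
move=> ->; rewrite mulr_natl fn_sqr pair_bigA //.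
Qed.
End Pars.

End Part5.
Import Part5.

Module Part6.
Local Open Scope complex_scope.
Section Exp.
Variables (R : realType) (d n : nat).
Local Notation C := (R[i]).
Local Notation D := (dimH d n).
Local Notation op := (op R d n).

Definition K0 : R := fn (1%:M : op).

Lemma mxpow_bound (B : op) m : fn (mxpow B m) <= K0 * fn B ^+ m.
Proof.
elim: m => [|m IH]; first by rewrite expr0 mulr1.
have -> : mxpow B m.+1 = B *m mxpow B m by [].
apply: le_trans (fn_mul _ _) _; rewrite exprS mulrCA.
by apply: ler_wpM2l; [exact: fn_ge0|].
Qed.

Lemma geo_le2 (r : R) N : 0 <= r -> r <= 1/2 -> \sum_(m < N) r ^+ m <= 2.
Proof.
move=> r0 r1; suff : \sum_(m < N) r ^+ m <= 2 - 2 * r ^+ N.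
  by move=> h; apply: le_trans h _; rewrite lerBlDr lerDl mulr_ge0 ?exprn_ge0.
elim: N => [|N IH]; first by rewrite big_ord0 expr0 mulr1 subrr.
rewrite big_ord_recr /= exprS.
have h : 0 <= r ^+ N by rewrite exprn_ge0.
have : r * r ^+ N <= 1/2 * r ^+ N by rewrite ler_wpM2r.
lra.
Qed.

Lemma fact_inv_C m : ((m`!)%:R^-1 : C) = ((m`!)%:R^-1 : R)%:C.
Proof. by rewrite fmorphV rmorph_nat. Qed.

Lemma nc_fact_inv m : nc ((m`!)%:R^-1 : C) <= 1.
Proof.
rewrite fact_inv_C nc_real ger0_norm ?invr_ge0 ?ler0n //.
by rewrite invf_le1 ?ler1n ?ltr0n ?fact_gt0.
Qed.

Section Proj.
Variable P : C -> R.
Hypothesis PD : forall z w, P (z + w) = P z + P w.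
Hypothesis Pnc : forall z, `|P z| <= nc z.

Lemma P0 : P 0 = 0.
Proof. by have := PD 0 0; rewrite addr0 => /eqP; rewrite -subr_eq subrr eq_sym => /eqP. Qed.

Lemma P_sum (I : finType) (F : I -> C) : P (\sum_i F i) = \sum_i P (F i).
Proof. exact: (big_morph _ PD P0). Qed.

Lemma expm_P_bound (B : op) k j : fn B <= 1/2 ->
  `|limn (fun N => P (expm_partial B N k j)) - (P ((1%:M : op) k j) + P (B k j))|
    <= 2 * K0 * fn B ^+ 2.
Proof.
move=> hB; set r := fn B.
have r0 : 0 <= r := fn_ge0 B.
have K00 : 0 <= K0 := fn_ge0 _.
pose u (m : nat) := P ((m`!)%:R^-1 * mxpow B m k j).
have hu : forall m, `|u m| <= K0 * r ^+ m.
  move=> m; apply: le_trans (Pnc _) _; rewrite ncM.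
  apply: le_trans (_ : 1 * nc (mxpow B m k j) <= _); last first.
    by rewrite mul1r; apply: le_trans (fn_entry _ _ _) (mxpow_bound _ _).
  by apply: ler_wpM2r; [exact: nc_ge0|exact: nc_fact_inv].
have Eser : (fun N => P (expm_partial B N k j)) = series u.
  apply/funext => N; rewrite /series /= /expm_partial summxE P_sum big_mkord.
  by apply: eq_bigr => m _; rewrite mxE.
rewrite Eser.
have cv : cvgn (series u).
  apply: normed_cvg.
  apply: (@series_le_cvg _ _ (geometric K0 r)).
  - by move=> m /=.
  - by move=> m /=; rewrite mulr_ge0 ?exprn_ge0.
  - by move=> m /=; rewrite hu.
  - apply: is_cvg_geometric_series; rewrite ger0_norm // /r; lra.
have u0 : u 0%N = P ((1%:M : op) k j) by rewrite /u /= invr1 mul1r.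
have u1 : u 1%N = P (B k j) by rewrite /u /= invr1 mul1r mulmx1.
have tail : forall N, `|series u N.+2 - (u 0%N + u 1%N)| <= 2 * K0 * r ^+ 2.
  move=> N; rewrite /series /= big_ltn // big_ltn //.
  set S := \sum_(2 <= i < N.+2) u i.
  have -> : u 0%N + (u 1%N + S) - (u 0%N + u 1%N) = S by ring.
  rewrite /S.
  rewrite -{1}[2%N]add0n big_addn subn2 /=.
  apply: le_trans (ler_norm_sum _ _ _) _.
  apply: le_trans (_ : \sum_(0 <= m < N) K0 * r ^+ 2 * r ^+ m <= _).
    by apply: ler_sum => m _; apply: le_trans (hu _) _; rewrite -mulrA -exprD addnC.
  rewrite -mulr_sumr big_mkord.
  have p : 0 <= K0 * r ^+ 2 by rewrite mulr_ge0 ?exprn_ge0.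
  have g : \sum_(m < N) r ^+ m <= 2 by apply: geo_le2 => //; rewrite /r.
  apply: le_trans (ler_wpM2l p g) _.
  by rewrite (_ : K0 * r ^+ 2 * 2 = 2 * K0 * r ^+ 2) //; ring.
rewrite -u0 -u1 ler_distl; apply/andP; split.
  apply: limr_ge => //; exists 2%N => // N /= hN.
  have := tail (N - 2)%N; rewrite -addn2 subnK //; rewrite ler_distl => /andP [h _] //.
apply: limr_le => //; exists 2%N => // N /= hN.
have := tail (N - 2)%N; rewrite -addn2 subnK //; rewrite ler_distl => /andP [_ h] //.
Qed.
End Proj.

Lemma ReN (z : C) : complex.Re (- z) = - complex.Re z.
Proof. by case: z. Qed.
Lemma ImN (z : C) : complex.Im (- z) = - complex.Im z.
Proof. by case: z. Qed.

Lemma expm_expand (B : op) : fn B <= 1/2 ->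
  fn (expm B - 1%:M - B) <= (D * D)%:R * (4 * K0 * fn B ^+ 2).
Proof.
move=> hB; apply: fn_bound => k j.
apply: le_trans (nc_le_ReIm _) _.
rewrite !mxE !ReD !ImD !ReN !ImN /=.
have h1 := expm_P_bound (@ReD R) (@Re_le R) k j hB.
have h2 := expm_P_bound (@ImD R) (@Im_le R) k j hB.
rewrite -!addrA -!opprD.
rewrite [(1%:M : op) k j]mxE in h1 h2.
apply: le_trans (lerD h1 h2) _.
by rewrite -!mulrDl -natrD.
Qed.
End Exp.

End Part6.
Import Part6.

Module Part7.
Local Open Scope complex_scope.
Section Infl.
Variables (R : realType) (d n : nat).
Hypothesis hd : (0 < d)%N.
Local Notation C := (R[i]).
Local Notation D := (dimH d n).
Local Notation op := (op R d n).

Lemma weight_le (a : pauli_string d n) : ((weight a)%:R : R) <= n%:R.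
Proof. by rewrite ler_nat /weight; apply: leq_trans (max_card _) _; rewrite card_ord. Qed.

Lemma l2_tr (Y : op) :
  l2 (fun a : pauli_string d n => nc (\tr (Y *m pauli R a))) = Num.sqrt (d ^ n)%:R * fn Y.
Proof.
rewrite /l2; under eq_bigr do rewrite nc_sqr.
by rewrite parseval // sqrtrM ?ler0n // sqrtr_sqr ger0_norm ?fn_ge0.
Qed.

Lemma infl_diff (X O : op) :
  `|influence X - influence O| <= n%:R * (fn (X - O) * (fn X + fn O)) / (d ^ n)%:R.
Proof.
have dn0 : (0 : R) < (d ^ n)%:R by rewrite ltr0n expn_gt0 hd.
rewrite /influence -sumrB.
under eq_bigr do rewrite -mulrBr.
apply: le_trans (ler_norm_sum _ _ _) _.
apply: le_trans (_ : \sum_a n%:R * `|pauli_weight X a - pauli_weight O a| <= _).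
  apply: ler_sum => a _; rewrite normrM ger0_norm ?ler0n //.
  by apply: ler_wpM2r => //; apply: weight_le.
rewrite -mulr_sumr -mulrA ler_wpM2l ?ler0n //.
have E : forall a, pauli_weight X a - pauli_weight O a =
   (cabs2 (\tr (X *m pauli R a)) - cabs2 (\tr (O *m pauli R a))) / (d ^ n)%:R ^+ 2.
  by move=> a; rewrite /pauli_weight mulrBl.
under eq_bigr do rewrite E normrM [`|_^-1|]ger0_norm ?invr_ge0 ?exprn_ge0 ?ler0n //.
rewrite -mulr_suml.
apply: le_trans (_ : (\sum_a nc (\tr ((X - O) *m pauli R a)) *
     (nc (\tr (X *m pauli R a)) + nc (\tr (O *m pauli R a)))) / (d ^ n)%:R ^+ 2 <= _).
  apply: ler_wpM2r; first by rewrite invr_ge0 exprn_ge0 ?ler0n.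
  apply: ler_sum => a _; apply: le_trans (cabs2_diff _ _) _.
  by rewrite mulmxBl linearB.
apply: le_trans (_ : (l2 (fun a => nc (\tr ((X - O) *m pauli R a))) *
   (l2 (fun a => nc (\tr (X *m pauli R a))) + l2 (fun a => nc (\tr (O *m pauli R a)))))
   / (d ^ n)%:R ^+ 2 <= _).
  apply: ler_wpM2r; first by rewrite invr_ge0 exprn_ge0 ?ler0n.
  apply: le_trans (CS _ _) _; apply: ler_wpM2l; first exact: l2_ge0.
  exact: l2_add.
rewrite !l2_tr.
have sq : Num.sqrt ((d ^ n)%:R : R) ^+ 2 = (d ^ n)%:R by rewrite sqr_sqrtr ?ler0n.
rewrite -mulrDr.
set q := Num.sqrt _ in sq *.
have -> : q * fn (X - O) * (q * (fn X + fn O)) / (d ^ n)%:R ^+ 2 =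
   q ^+ 2 * (fn (X - O) * (fn X + fn O)) / (d ^ n)%:R ^+ 2 by ring.
rewrite sq le_eqVlt; apply/orP; left; apply/eqP.
have dn : ((d ^ n)%:R : R) != 0 by rewrite lt0r_neq0.
by field.
Qed.

Lemma conj_diff (O H E : op) (c : C) (i0 : 'I_D) : adj H = H -> conjc c = - c ->
  fn ((1%:M + c *: H + E) *m O *m adj (1%:M + c *: H + E) - O) <=
  (2 * nc c * opnorm H + 2 * fn E + (fn (c *: H) + fn E) ^+ 2) * fn O.
Proof.
move=> hH hc; set B := c *: H.
have hadj : adj (1%:M + B + E) = 1%:M + (- B + adj E).
  by rewrite !adjD adj1 /B adjZ hH hc scaleNr addrA.
rewrite hadj -addrA; set V := B + E; set W := - B + adj E.
have -> : (1%:M + V) *m O *m (1%:M + W) - O = (V *m O + O *m W) + V *m O *m W.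
  rewrite mulmxDl mul1mx mulmxDr mulmx1 [(O + _) *m W]mulmxDl.
  by rewrite addrAC (addrAC O) subrr add0r addrA.
have hVW : V *m O + O *m W = (B *m O + O *m (- B)) + (E *m O + O *m adj E).
  by rewrite /V /W mulmxDl mulmxDr addrACA.
have hB : B *m O + O *m (- B) = c *: (H *m O - O *m H).
  by rewrite /B mulmxN -scalemxAl -scalemxAr scalerBr.
have s0 := fn_ge0 O.
have e0 := fn_ge0 E.
have N0 := opnorm_ge0 H i0.
have fV : fn V <= fn B + fn E by apply: fn_add.
have fW : fn W <= fn B + fn E by rewrite /W; apply: le_trans (fn_add _ _) _; rewrite fn_opp fn_adj.
apply: le_trans (fn_add _ _) _.
rewrite hVW hB.
have h1 : fn (c *: (H *m O - O *m H)) <= nc c * (2 * opnorm H * fn O).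
  rewrite fn_scale; apply: ler_wpM2l; first exact: nc_ge0.
  apply: le_trans (fn_sub _ _) _.
  have := fn_mul_op H O i0; have := fn_mul_op_r O i0 hH; lra.
have h2 : fn (E *m O + O *m adj E) <= 2 * fn E * fn O.
  apply: le_trans (fn_add _ _) _.
  have := fn_mul E O; have := fn_mul O (adj E); rewrite fn_adj; lra.
have h3 : fn (V *m O *m W) <= (fn B + fn E) ^+ 2 * fn O.
  apply: le_trans (fn_mul _ _) _; apply: le_trans (ler_wpM2r (fn_ge0 W) (fn_mul V O)) _.
  have b0 : 0 <= fn B + fn E by rewrite addr_ge0 ?fn_ge0.
  rewrite expr2 mulrAC; apply: ler_pM; rewrite ?mulr_ge0 ?fn_ge0 //.
  by apply: ler_pM; rewrite ?fn_ge0.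
have := fn_add (c *: (H *m O - O *m H)) (E *m O + O *m adj E).
move: h1 h2 h3; set x1 := fn (c *: _); set x2 := fn (E *m O + _); set x3 := fn (V *m O *m W).
move=> h1 h2 h3 h4.
have : x1 + x2 + x3 <= nc c * (2 * opnorm H * fn O) + 2 * fn E * fn O + (fn B + fn E) ^+ 2 * fn O by lra.
move=> h5; apply: le_trans _ (le_trans h5 _); first by lra.
rewrite le_eqVlt; apply/orP; left; apply/eqP; ring.
Qed.
End Infl.

End Part7.
Import Part7.

Module Part8.
Local Open Scope classical_set_scope.
Section Lim.
Variable R : realType.

Lemma lim_bound (g : R -> R) (M : R) :
  (forall eps, 0 < eps -> exists2 tau, 0 < tau & forall t, t != 0 -> `|t| < tau -> `|g t| <= M + eps) ->
  `|lim (g x @[x --> 0^'])| <= M.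
Proof.
move=> H.
have key : forall eps, 0 < eps -> \forall t \near 0^', `|g t| <= M + eps.
  move=> eps /H [tau tau0 ht]; exists tau => // t /= tb tne.
  by apply: ht => //; move: tb; rewrite /ball /= sub0r normrN.
have M0 : 0 <= M.
  apply/ler_addgt0Pr => eps e0.
  have [tau tau0 ht] := H eps e0.
  have t2 : 0 < tau / 2 by rewrite divr_gt0.
  apply: le_trans (ht (tau / 2) _ _); first exact: normr_ge0.
    by rewrite gt_eqF.
  by rewrite gtr0_norm //; lra.
case: (pselect (cvg (g x @[x --> 0^']))) => cv; last first.
  by rewrite dvgP // normr0.
apply/ler_addgt0Pr => eps e0; rewrite ler_norml; apply/andP; split.
  apply: limr_ge => //; apply: filterS (key eps e0) => t.
  by rewrite ler_norml => /andP [].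
apply: limr_le => //; apply: filterS (key eps e0) => t.
by rewrite ler_norml => /andP [_ h].
Qed.

Lemma arith1 (N C1 a x : R) : 0 <= N -> 0 <= C1 -> 0 <= a -> a <= 1 -> 0 <= x ->
  x <= a * (2 * N + a * C1) ->
  x * (x + 2) <= a * (4 * N + a * (2 * C1 + (2 * N + C1) ^+ 2)).
Proof.
move=> N0 C0 a0 a1 x0 hx.
set m := 2 * N + a * C1.
have m0 : 0 <= m by rewrite /m addr_ge0 ?mulr_ge0.
have mle : m <= 2 * N + C1.
  by rewrite /m lerD2l -[X in _ <= X]mul1r ler_wpM2r.
have h1 : x * (x + 2) <= (a * m) * (a * m + 2).
  by apply: ler_pM; rewrite ?addr_ge0 ?lerD2r.
apply: le_trans h1 _.
have e : (a * m) * (a * m + 2) = a * (4 * N + 2 * a * C1 + a * m ^+ 2).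
  by rewrite /m; ring.
rewrite e; apply: ler_wpM2l => //.
have : a * m ^+ 2 <= a * (2 * N + C1) ^+ 2.
  by apply: ler_wpM2l => //; rewrite ler_pXn2r ?nnegrE // ?addr_ge0 ?mulr_ge0.
lra.
Qed.

Lemma arith2 (N KE h a e : R) : 0 <= N -> 0 <= KE -> 0 <= h -> 0 <= a -> a <= 1 ->
  0 <= e -> e <= KE * (a * h) ^+ 2 ->
  2 * a * N + 2 * e + (a * h + e) ^+ 2 <=
  a * (2 * N + a * (2 * KE * h ^+ 2 + (h + KE * h ^+ 2) ^+ 2)).
Proof.
move=> N0 K0 h0 a0 a1 e0 he.
have a2 : a ^+ 2 <= a by rewrite expr2 -[X in _ <= X]mulr1 ler_wpM2l.
have f1 : a * h + e <= a * (h + KE * h ^+ 2).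
  have : KE * (a * h) ^+ 2 <= a * (KE * h ^+ 2).
    rewrite exprMn mulrCA ler_wpM2r // ?mulr_ge0 ?exprn_ge0 //.
  rewrite mulrDr; lra.
have f2 : (a * h + e) ^+ 2 <= a ^+ 2 * (h + KE * h ^+ 2) ^+ 2.
  by rewrite -exprMn ler_pXn2r ?nnegrE ?addr_ge0 ?mulr_ge0 ?exprn_ge0 // addr_ge0 // mulr_ge0 // exprn_ge0.
have f3 : 2 * e <= a ^+ 2 * (2 * KE * h ^+ 2).
  have : e <= a ^+ 2 * (KE * h ^+ 2) by move: he; rewrite exprMn mulrCA.
  rewrite mulrCA; lra.
apply: (@le_trans _ _ (2 * a * N + a ^+ 2 * (2 * KE * h ^+ 2) + a ^+ 2 * (h + KE * h ^+ 2) ^+ 2)).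
  exact: lerD (lerD (lexx _) f3) f2.
rewrite le_eqVlt; apply/orP; left; apply/eqP; ring.
Qed.
End Lim.

End Part8.
Import Part8.

Local Open Scope complex_scope.

Theorem mainTheorem16 (R : realType) (d n : nat) (hd : (2 <= d)%N) (hn : (1 <= n)%N)
  (H O : op R d n) (hH : is_hermitian H) (hO : hs_norm O = 1) :
  `| influence_rate H O | <= 4 * n%:R * opnorm H.
Proof.
have d0 : (0 < d)%N by apply: leq_trans hd.
have Dn : dimH d n = (d ^ n)%N by rewrite /dimH card_ffun !card_ord.
have D0 : (0 < dimH d n)%N by rewrite Dn expn_gt0 d0.
pose i0 : 'I_(dimH d n) := Ordinal D0.
set N := opnorm H.
have N0 : 0 <= N := opnorm_ge0 H i0.
set s := fn O.
have dn : (0:R) < (d ^ n)%:R by rewrite ltr0n expn_gt0 d0.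
have s2 : s ^+ 2 = (d ^ n)%:R.
  move: hO; rewrite /hs_norm tr_fn -/s => h.
  have : s ^+ 2 / (d ^ n)%:R = 1.
    by rewrite -[LHS]sqr_sqrtr ?divr_ge0 ?sqr_ge0 ?ler0n // h expr1n.
  by move=> /(congr1 (fun x => x * (d ^ n)%:R)); rewrite mul1r divfK // lt0r_neq0.
have s0 : 0 < s.
  rewrite lt0r fn_ge0 andbT; apply/eqP => h0; move: s2; rewrite h0 expr0n /= => /eqP.
  by rewrite eq_sym (negbTE (lt0r_neq0 dn)).
set h := fn H.
have h0 : 0 <= h := fn_ge0 H.
set KE := ((dimH d n * dimH d n)%:R * (4 * K0 R d n) : R).
have KE0 : 0 <= KE by rewrite mulr_ge0 ?ler0n // mulr_ge0 // fn_ge0.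
set C1 := 2 * KE * h ^+ 2 + (h + KE * h ^+ 2) ^+ 2.
have C10 : 0 <= C1.
  apply: addr_ge0; last exact: sqr_ge0.
  by apply: mulr_ge0; [apply: mulr_ge0|apply: exprn_ge0].
set C2 := 2 * C1 + (2 * N + C1) ^+ 2.
have C20 : 0 <= C2.
  apply: addr_ge0; last exact: sqr_ge0.
  by apply: mulr_ge0.
set tau := (2 * h + 1)^-1.
have tau0 : 0 < tau by rewrite invr_gt0; lra.
set f := fun t : R => influence (evol H t *m O *m adj (evol H t)).
have pw : forall t, `|t| <= tau -> `|f t - influence O| <= n%:R * (`|t| * (4 * N + `|t| * C2)).
  move=> t ht.
  have a0 : 0 <= `|t| := normr_ge0 t.
  have ht' : `|t| * (2 * h + 1) <= 1.
    by rewrite -ler_pdivlMr ?mul1r //; lra.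
  have a1 : `|t| <= 1.
    have : `|t| * h >= 0 by rewrite mulr_ge0.
    move: ht'; rewrite mulrDr mulr1; lra.
  have rle : `|t| * h <= 1 / 2.
    have : `|t| * h >= 0 by rewrite mulr_ge0.
    move: ht'; rewrite mulrDr mulr1 mulrCA; lra.
  pose c : R[i] := Complex 0 (- t).
  have hc : conjc c = - c.
    by apply/eqP; rewrite eq_complex /= oppr0 !eqxx.
  have ncc : nc c = `|t|.
    by rewrite /nc /cabs2 /= expr0n /= add0r sqrrN sqrtr_sqr.
  pose B := c *: H.
  have fB : fn B = `|t| * h by rewrite /B fn_scale ncc.
  pose E := expm B - 1%:M - B.
  have hE : fn E <= KE * (`|t| * h) ^+ 2.
    have := expm_expand (B := B); rewrite fB mulrA => /(_ rle) //.
  have hU : evol H t = 1%:M + B + E.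
    by rewrite /E /evol -/c -/B -(addrA (expm B)) -opprD addrC addNKr.
  set X := evol H t *m O *m adj (evol H t).
  have hX : fn (X - O) <= (2 * `|t| * N + 2 * fn E + (`|t| * h + fn E) ^+ 2) * s.
    have := conj_diff O E i0 hH hc; rewrite -/B -hU -/X ncc fB //.
  have hI := infl_diff d0 X O.
  set del := fn (X - O) / s.
  have del0 : 0 <= del by rewrite divr_ge0 ?fn_ge0 // ltW.
  have delb : del <= `|t| * (2 * N + `|t| * C1).
    apply: le_trans (arith2 N0 KE0 h0 a0 a1 (fn_ge0 E) hE).
    by rewrite ler_pdivrMr //.
  have fX : fn X <= fn (X - O) + s.
    by have := fn_add (X - O) O; rewrite subrK.
  apply: le_trans hI _.
  rewrite -mulrA ler_wpM2l ?ler0n //.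
  apply: le_trans (arith1 N0 C10 a0 a1 del0 delb).
  rewrite -s2 /del.
  have e : fn (X - O) / s * (fn (X - O) / s + 2) = fn (X - O) * (fn (X - O) + 2 * s) / s ^+ 2.
    by field; rewrite lt0r_neq0.
  rewrite e; apply: ler_wpM2r; first by rewrite invr_ge0 exprn_ge0 // ltW.
  apply: ler_wpM2l; first exact: fn_ge0.
  rewrite -/s; lra.
have f0 : f 0 = influence O.
  have := pw 0; rewrite normr0 mul0r mulr0 => /(_ (ltW tau0)).
  by rewrite normr_le0 subr_eq0 => /eqP.
rewrite /influence_rate /derive1.
apply: lim_bound => eps e0.
have q0 : 0 < n%:R * C2 + 1 by rewrite ltr_wpDl // mulr_ge0 ?ler0n.
exists (Order.min tau (eps / (n%:R * C2 + 1))).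
  by rewrite lt_min tau0 divr_gt0.
move=> t tn; rewrite lt_min => /andP [t1 t2].
rewrite addr0.
change (`|t^-1 *: (f t - f 0)| <= 4 * n%:R * N + eps).
rewrite f0 normrZ normfV.
have tp : 0 < `|t| by rewrite normr_gt0.
have ti : 0 <= `|t|^-1 by rewrite invr_ge0 ltW.
apply: le_trans (ler_wpM2l ti (pw t (ltW t1))) _.
have -> : `|t|^-1 * (n%:R * (`|t| * (4 * N + `|t| * C2))) =
   4 * n%:R * N + `|t| * (n%:R * C2) by field; rewrite lt0r_neq0.
have : `|t| * (n%:R * C2 + 1) < eps by rewrite -ltr_pdivlMr.
have -> : `|t| * (n%:R * C2 + 1) = `|t| * (n%:R * C2) + `|t| by ring.
move: (`|t| * (n%:R * C2)) => p.
lra.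
Qed.
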